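(* Let $D>0$, let $M,L,p\in\mathbb{N}$ with $L\geq 1$, $M\geq 1$ and $p\geq 2$, and let $X=[0,D]^M$ with the Euclidean distance $d$. Endow $X^p$ with the maximum metric $d_{\max}((x_1,\dots,x_p),(y_1,\dots,y_p))=\max_{1\le j\le p} d(x_j,y_j)$. Let $f_1,\dots,f_L:X^p\to X$ be contractions, i.e. Lipschitz maps with respect to $d_{\max}$ and $d$ with Lipschitz constants $\mathrm{lip}(f_i)<1$, and put $C=\max\{\mathrm{lip}(f_1),\dots,\mathrm{lip}(f_L)\}<1$. Let $A_{\mathcal{F}}$ be the unique nonempty compact set $A\subseteq X$ satisfying $A=\bigcup_{i=1}^{L} f_i(A\times\cdots\times A)$ ($p$ factors). Let $(n_k)_{k\ge 1}$ be a sequence of positive integers and put $\varepsilon_k=\frac{D\sqrt{M}}{n_k}$. Let $K_0\subseteq X$ be a nonempty finite set, put $\tilde A_0=K_0$ and, for $k\ge 1$, $$\tilde A_k=\Big\{\tfrac{D}{n_k}\Big[\tfrac{n_k}{D}f_l(u_1,\dots,u_p)\Big] \;\Big|\; u_1,\dots,u_p\in\tilde A_{k-1},\ l\in\{1,\dots,L\}\Big\},$$ where for $x=(x_1,\dots,x_M)\in\mathbb{R}^M$ we write $[x]=([x_1],\dots,[x_M])$, with $[t]$ the greatest integer $\le t$. Then for every $k\in\mathbb{N}$, $k\ge 1$, $$h(\tilde A_k,A_{\mathcal{F}})\le \varepsilon_k+C\varepsilon_{k-1}+C^2\varepsilon_{k-2}+\cdots+C^{k-1}\varepsilon_1+C^k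 D\sqrt{M},$$ where $h$ denotes the Hausdorff–Pompeiu metric on nonempty compact subsets of $X$.
   Context: For nonempty compact $K_1,K_2\subseteq X$, $d(K_1,K_2)=\sup_{x\in K_1}\inf_{y\in K_2}d(x,y)$ and the Hausdorff–Pompeiu distance is $h(K_1,K_2)=\max\{d(K_1,K_2),d(K_2,K_1)\}$. The sets $\tilde A_k$ are the successive outputs of the ''grid algorithm'': at each step every map $f_l$ is applied to all $p$-tuples of points from the previous set, and each resulting point is replaced by the lower-left corner of the cell of the grid of mesh $D/n_k$ containing it. *)

(* Defs.v *)
From HB Require Import structures.
From mathcomp Require Import all_boot all_order all_algebra.
From mathcomp Require Import all_classical all_reals all_analysis.
Set Implicit Arguments. Unset Strict Implicit. Unset Printing Implicit Defensive.
Import Order.TTheory GRing.Theory Num.Theory.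
Import numFieldNormedType.Exports.
Local Open Scope classical_set_scope.
Local Open Scope ring_scope.

Section Defs.
Variables (R : realType) (M p : nat).

Definition pt := 'rV[R]_M.

Definition edist (x y : pt) : R := Num.sqrt (\sum_(i < M) (x ord0 i - y ord0 i) ^+ 2).

Definition cube (D : R) : set pt := [set x | forall i, 0 <= x ord0 i <= D].

Definition dmax (u v : 'I_p -> pt) : R := \big[Num.max/0]_(j < p) edist (u j) (v j).

Definition tuples (A : set pt) : set ('I_p -> pt) := [set u | forall j, A (u j)].

Definition lipc_on (D : R) (f : ('I_p -> pt) -> pt) (c : R) : Prop :=
  0 <= c /\ forall u v, tuples (cube D) u -> tuples (cube D) v ->
    edist (f u) (f v) <= c * dmax u v.

Definition liprate (D : R) (f : ('I_p -> pt) -> pt) : R := inf [set c | lipc_on D f c].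

Definition exc (K1 K2 : set pt) : R :=
  sup [set inf [set edist x y | y in K2] | x in K1].
Definition hausdorff (K1 K2 : set pt) : R := Num.max (exc K1 K2) (exc K2 K1).

Definition grid (D : R) (n : nat) (x : pt) : pt :=
  \row_(i < M) (D / n%:R * (Num.floor (n%:R / D * x ord0 i))%:~R).

Fixpoint Atil (L : nat) (f : 'I_L -> ('I_p -> pt) -> pt) (D : R) (n : nat -> nat)
  (K0 : set pt) (k : nat) : set pt :=
  match k with
  | 0 => K0
  | k'.+1 => [set y | exists (l : 'I_L) (u : 'I_p -> pt),
                tuples (Atil f D n K0 k') u /\ y = grid D (n k'.+1) (f l u)]
  end.

End Defs.

(* Main.v *)
Require Import Defs.
From HB Require Import structures.
From mathcomp Require Import all_boot all_order all_algebra.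
From mathcomp Require Import all_classical all_reals all_analysis.
From mathcomp Require Import ring lra.
Import Order.TTheory GRing.Theory Num.Theory.
Import numFieldNormedType.Exports.
Local Open Scope classical_set_scope.
Local Open Scope ring_scope.

Section H.
Variables (R : realType) (M p : nat).
Local Notation pt := (pt R M).
Local Notation edist := (@Defs.edist R M).

Lemma edist_ge0 (x y : pt) : 0 <= edist x y.
Proof. exact: sqrtr_ge0. Qed.

Lemma edist_sym (x y : pt) : edist x y = edist y x.
Proof. by rewrite /Defs.edist; congr Num.sqrt; apply: eq_bigr => i _; rewrite -sqrrN opprB. Qed.

Lemma edist_coord (x y : pt) (r : R) : 0 <= r ->
  (forall i, `|x ord0 i - y ord0 i| <= r) -> edist x y <= r * Num.sqrt M%:R.
Proof.
move=> r0 H.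
have -> : r * Num.sqrt M%:R = Num.sqrt (\sum_(i < M) r ^+ 2).
  by rewrite sumr_const card_ord -[r ^+ 2 *+ M]mulr_natr sqrtrM ?sqr_ge0 // sqrtr_sqr ger0_norm.
rewrite /Defs.edist; apply: ler_wsqrtr; rewrite ler_sum // => i _.
have := H i; rewrite ler_norml => /andP[h1 h2]; nra.
Qed.

Lemma cauchy_schwarz (a b : 'I_M -> R) :
  \sum_i a i * b i <= Num.sqrt (\sum_i a i ^+ 2) * Num.sqrt (\sum_i b i ^+ 2).
Proof.
set Sa := \sum_i a i ^+ 2; set Sb := \sum_i b i ^+ 2.
have Sa0 : 0 <= Sa by apply: sumr_ge0 => i _; apply: sqr_ge0.
have Sb0 : 0 <= Sb by apply: sumr_ge0 => i _; apply: sqr_ge0.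
set x := Num.sqrt Sa; set y := Num.sqrt Sb.
have x0 : 0 <= x by apply: sqrtr_ge0.
have y0 : 0 <= y by apply: sqrtr_ge0.
have [xe|xn] := eqVneq x 0.
  have ai : forall i, a i = 0.
    move=> i; apply/eqP; rewrite -sqrf_eq0; apply/eqP.
    apply: (@psumr_eq0P _ _ xpredT (fun i => a i ^+ 2)) => //.
      by move=> j _; apply: sqr_ge0.
    by rewrite -/Sa -(sqr_sqrtr Sa0) -/x xe expr2 mul0r.
  by rewrite xe mul0r big1 // => i _; rewrite ai mul0r.
have [ye|yn] := eqVneq y 0.
  have bi : forall i, b i = 0.
    move=> i; apply/eqP; rewrite -sqrf_eq0; apply/eqP.
    apply: (@psumr_eq0P _ _ xpredT (fun i => b i ^+ 2)) => //.
      by move=> j _; apply: sqr_ge0.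
    by rewrite -/Sb -(sqr_sqrtr Sb0) -/y ye expr2 mul0r.
  by rewrite ye mulr0 big1 // => i _; rewrite bi mulr0.
have xp : 0 < x by rewrite lt_def xn.
have yp : 0 < y by rewrite lt_def yn.
have key : 2 * (\sum_i a i * b i) * (x * y) <= Sa * y ^+ 2 + Sb * x ^+ 2.
  have -> : 2 * (\sum_i a i * b i) * (x * y) = \sum_i (2 * (a i * b i) * (x * y)).
    by rewrite mulr_sumr mulr_suml.
  have -> : Sa * y ^+ 2 + Sb * x ^+ 2 = \sum_i (a i ^+ 2 * y ^+ 2 + b i ^+ 2 * x ^+ 2).
    by rewrite big_split /= /Sa /Sb !mulr_suml.
  apply: ler_sum => i _.
  have := sqr_ge0 (a i * y - b i * x); nra.
have ex : x ^+ 2 = Sa by rewrite sqr_sqrtr.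
have ey : y ^+ 2 = Sb by rewrite sqr_sqrtr.
rewrite -ex -ey in key.
have xyp : 0 < x * y by apply: mulr_gt0.
nra.
Qed.

Lemma edist_triangle (x y z : pt) : edist x z <= edist x y + edist y z.
Proof.
rewrite /Defs.edist.
set a := fun i => x ord0 i - y ord0 i.
set b := fun i => y ord0 i - z ord0 i.
have -> : \sum_(i < M) (x ord0 i - z ord0 i) ^+ 2 = \sum_i (a i + b i) ^+ 2.
  by apply: eq_bigr => i _; rewrite /a /b; congr (_ ^+ 2); lra.
rewrite -/(\sum_i a i ^+ 2) -/(\sum_i b i ^+ 2).
have Sa0 : 0 <= \sum_i a i ^+ 2 by apply: sumr_ge0 => i _; apply: sqr_ge0.
have Sb0 : 0 <= \sum_i b i ^+ 2 by apply: sumr_ge0 => i _; apply: sqr_ge0.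
have cs := cauchy_schwarz a b.
set u := Num.sqrt (\sum_i a i ^+ 2) in cs *.
set v := Num.sqrt (\sum_i b i ^+ 2) in cs *.
have u0 : 0 <= u by apply: sqrtr_ge0.
have v0 : 0 <= v by apply: sqrtr_ge0.
have -> : u + v = Num.sqrt ((u + v) ^+ 2) by rewrite sqrtr_sqr ger0_norm // addr_ge0.
apply: ler_wsqrtr.
have -> : \sum_i (a i + b i) ^+ 2 = \sum_i a i ^+ 2 + \sum_i b i ^+ 2 + 2 * \sum_i a i * b i.
  rewrite mulr_sumr -!big_split /=; apply: eq_bigr => i _; ring.
rewrite -(sqr_sqrtr Sa0) -(sqr_sqrtr Sb0) -/u -/v; nra.
Qed.


Definition infd (x : pt) (K : set pt) := inf [set edist x y | y in K].

Lemma infd_le x K y : K y -> infd x K <= edist x y.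
Proof.
move=> Ky; apply: ge_inf; last by exists y.
by exists 0 => _ [z _ <-]; exact: edist_ge0.
Qed.

Lemma infd_ge0 x K : K !=set0 -> 0 <= infd x K.
Proof.
move=> [y Ky]; apply: lb_le_inf; first by exists (edist x y), y.
by move=> _ [z _ <-]; exact: edist_ge0.
Qed.

Lemma infd_approx x K e : K !=set0 -> 0 < e ->
  exists2 y, K y & edist x y < infd x K + e.
Proof.
move=> [y0 Ky0] e0.
have hi : has_inf [set edist x y | y in K].
  split; first by exists (edist x y0), y0.
  by exists 0 => _ [z _ <-]; exact: edist_ge0.
have [_ [y Ky <-] h] := inf_adherent e0 hi.
by exists y.
Qed.

Lemma dist_cube D (x y : pt) : 0 <= D -> cube D x -> cube D y ->
  edist x y <= D * Num.sqrt M%:R.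
Proof.
move=> D0 hx hy; apply: edist_coord => // i.
have := hx i; have := hy i => /andP[a b] /andP[c d].
rewrite ler_norml; apply/andP; split; lra.
Qed.

Lemma infd_le_exc D K1 K2 x : 0 <= D -> K1 `<=` cube D -> K2 `<=` cube D ->
  K2 !=set0 -> K1 x -> infd x K2 <= exc K1 K2.
Proof.
move=> D0 c1 c2 [y0 Ky0] Kx; apply: ub_le_sup; last by exists x.
exists (D * Num.sqrt M%:R) => _ [z Kz <-].
have h1 := infd_le z K2 y0 Ky0. have h2 : edist z y0 <= D * Num.sqrt M%:R by apply: dist_cube => //; [exact: c1|exact: c2]. exact: (le_trans h1 h2).
Qed.

Lemma exc_le K1 K2 B : K1 !=set0 -> (forall x, K1 x -> infd x K2 <= B) ->
  exc K1 K2 <= B.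
Proof.
move=> [x Kx] h; apply: ge_sup; first by exists (infd x K2), x.
by move=> _ [z Kz <-]; apply: h.
Qed.

Lemma grid_prop D m (x : pt) : 0 < D -> (0 < m)%N -> cube D x ->
  cube D (grid D m x) /\ edist (grid D m x) x <= D * Num.sqrt M%:R / m%:R.
Proof.
move=> D0 m0 hx.
have mp : 0 < m%:R :> R by rewrite ltr0n.
have step : forall i, 0 <= grid D m x ord0 i <= x ord0 i /\
    x ord0 i - grid D m x ord0 i <= D / m%:R.
  move=> i; rewrite mxE.
  set t := m%:R / D * x ord0 i.
  have xi := hx i; move/andP: xi => [xi0 xiD].
  have t0 : 0 <= t by rewrite /t mulr_ge0 // divr_ge0 // ltW.
  have z0 : 0 <= (Num.floor t)%:~R :> R by rewrite ler0z floor_ge0.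
  have z1 := floor_le t.
  have z2 := floorD1_gt t.
  rewrite intrD in z2.
  set z := (Num.floor t)%:~R : R in z0 z1 z2 *.
  have Dm : 0 < D / m%:R by rewrite divr_gt0.
  have ex : D / m%:R * t = x ord0 i.
    rewrite /t; field; apply/andP; split; rewrite gt_eqF //.
  have h1 : D / m%:R * z <= D / m%:R * t by rewrite ler_wpM2l // ltW.
  have h2 : D / m%:R * t < D / m%:R * (z + 1) by rewrite ltr_pM2l.
  rewrite ex mulrDr mulr1 in h2; rewrite ex in h1.
  split; [apply/andP; split => //; exact: mulr_ge0 (ltW Dm) z0 | lra].
split.
  move=> i; have [/andP[a b] _] := step i; rewrite a /=.
  by apply: le_trans b _; have /andP[] := hx i.
have -> : D * Num.sqrt M%:R / m%:R = D / m%:R * Num.sqrt M%:R by rewrite mulrAC.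
apply: edist_coord; first by rewrite divr_ge0 // ltW.
move=> i; have [/andP[a b] c] := step i.
rewrite distrC ger0_norm ?subr_ge0 //.
Qed.

Lemma dmax_ge0 (u v : 'I_p -> pt) : 0 <= dmax u v.
Proof.
rewrite /dmax; apply: (big_ind (fun x => 0 <= x)) => //.
  by move=> a b a0 b0; rewrite le_max a0.
by move=> i _; exact: edist_ge0.
Qed.

Lemma dmax_le (u v : 'I_p -> pt) B : 0 <= B -> (forall j, edist (u j) (v j) <= B) ->
  dmax u v <= B.
Proof. by move=> B0 h; apply: bigmax_le. Qed.

Lemma liprate_prop D (g : ('I_p -> pt) -> pt) : (exists c, lipc_on D g c) ->
  0 <= liprate D g /\ forall u v, tuples (cube D) u -> tuples (cube D) v ->
    edist (g u) (g v) <= liprate D g * dmax u v.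
Proof.
move=> [c0 hc0]; split.
  by apply: lb_le_inf; [exists c0 | move=> c [c0' _]].
move=> u v hu hv.
have [d0|dp] := eqVneq (dmax u v) 0.
  rewrite d0 mulr0; have [_ h] := hc0; have := h u v hu hv.
  by rewrite d0 mulr0.
have dpos : 0 < dmax u v by rewrite lt_def dp dmax_ge0.
rewrite -ler_pdivrMr //; apply: lb_le_inf; first by exists c0.
move=> c [_ h]; rewrite ler_pdivrMr //; exact: h.
Qed.


Lemma step_lemma (D : R) (L : nat) (f : 'I_L -> ('I_p -> pt) -> pt) (A B : set pt)
  (m : nat) (C : R) (l0 : 'I_L) :
  0 < D -> (0 < m)%N -> 0 <= C ->
  (forall l u, tuples (cube D) u -> cube D (f l u)) ->
  (forall l u v, tuples (cube D) u -> tuples (cube D) v ->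
     edist (f l u) (f l v) <= C * dmax u v) ->
  A !=set0 -> A `<=` cube D ->
  A = [set y | exists (l : 'I_L) (u : 'I_p -> pt), tuples A u /\ y = f l u] ->
  B !=set0 -> B `<=` cube D ->
  let S := [set y | exists (l : 'I_L) (u : 'I_p -> pt),
                tuples B u /\ y = grid D m (f l u)] in
  [/\ S !=set0, S `<=` cube D &
      hausdorff S A <= D * Num.sqrt M%:R / m%:R + C * hausdorff B A].
Proof.
move=> D0 m0 C0 fcube flip An0 Acube HA Bn0 Bcube S.
have Adec : forall a, A a -> exists l (b : 'I_p -> pt), tuples A b /\ a = f l b.
  by move=> a; rewrite {1}HA.
have Acl : forall l (b : 'I_p -> pt), tuples A b -> A (f l b).
  by move=> l b Hb; rewrite HA; exists l, b.
have TB : forall u : 'I_p -> pt, tuples B u -> tuples (cube D) u by move=> u hu j; exact: (Bcube _ (hu j)).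
have TA : forall u : 'I_p -> pt, tuples A u -> tuples (cube D) u by move=> u hu j; exact: (Acube _ (hu j)).
set eps := D * Num.sqrt M%:R / m%:R.
set H := hausdorff B A.
have e1 : exc B A <= H by rewrite /H /hausdorff le_max lexx.
have e2 : exc A B <= H by rewrite /H /hausdorff le_max lexx orbT.
have H0 : 0 <= H.
  case: Bn0 => b0 Bb0; apply: le_trans e1.
  apply: le_trans (infd_le_exc D B A b0 (ltW D0) Bcube Acube An0 Bb0).
  exact: infd_ge0.
have Sc : S `<=` cube D.
  move=> _ [l [u [hu ->]]]; apply: (grid_prop D m _ D0 m0 _).1.
  by apply: fcube; apply: TB.
have Sn : S !=set0.
  case: Bn0 => b0 Bb0.
  by exists (grid D m (f l0 (fun _ => b0))), l0, (fun _ => b0); split.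
split => //.
have dpos : forall e, 0 < e -> 0 < e / (C + 1) /\ C * (e / (C + 1)) <= e.
  move=> e e0; have C1 : 0 < C + 1 by lra.
  split; first by rewrite divr_gt0.
  rewrite mulrCA ger_pMr // ler_pdivrMr // mul1r; lra.
rewrite /hausdorff ge_max; apply/andP; split.
- apply: exc_le => // _ [l [u [hu ->]]].
  apply/ler_addgt0Pr => e e0.
  have [d0 Cd] := dpos e e0; set d := e / (C + 1) in d0 Cd.
  have : forall j, exists a, A a /\ edist (u j) a < H + d.
    move=> j; have [a Aa ha] := infd_approx (u j) A d An0 d0.
    exists a; split => //; apply: (lt_le_trans ha); rewrite lerD2r.
    apply: le_trans e1; exact: infd_le_exc D B A (u j) (ltW D0) Bcube Acube An0 (hu j).
  case/choice => a Ha.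
  have Ta : tuples A a by move=> j; case: (Ha j).
  apply: le_trans (infd_le _ A _ (Acl l a Ta)) _.
  apply: le_trans (edist_triangle _ (f l u) _) _.
  have h1 : edist (grid D m (f l u)) (f l u) <= eps.
    by apply: (grid_prop D m _ D0 m0 _).2; apply: fcube; apply: TB.
  have h2 : edist (f l u) (f l a) <= C * (H + d).
    apply: le_trans (flip l u a (TB u hu) (TA a Ta)) _.
    apply: ler_wpM2l => //; apply: dmax_le; first by lra.
    by move=> j; case: (Ha j) => _ /ltW.
  have : C * (H + d) = C * H + C * d by rewrite mulrDr.
  lra.
- apply: exc_le => // a Aa.
  have [l [b [Tb ->]]] := Adec a Aa.
  apply/ler_addgt0Pr => e e0.
  have [d0 Cd] := dpos e e0; set d := e / (C + 1) in d0 Cd.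
  have : forall j, exists u, B u /\ edist (b j) u < H + d.
    move=> j; have [u Bu hu] := infd_approx (b j) B d Bn0 d0.
    exists u; split => //; apply: (lt_le_trans hu); rewrite lerD2r.
    apply: le_trans e2; exact: infd_le_exc D A B (b j) (ltW D0) Acube Bcube Bn0 (Tb j).
  case/choice => u Hu.
  have Tu : tuples B u by move=> j; case: (Hu j).
  have Sy : S (grid D m (f l u)) by exists l, u.
  apply: le_trans (infd_le _ S _ Sy) _.
  apply: le_trans (edist_triangle _ (f l u) _) _.
  have h1 : edist (f l u) (grid D m (f l u)) <= eps.
    by rewrite edist_sym; apply: (grid_prop D m _ D0 m0 _).2; apply: fcube; apply: TB.
  have h2 : edist (f l b) (f l u) <= C * (H + d).
    apply: le_trans (flip l b u (TA b Tb) (TB u Tu)) _.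
    apply: ler_wpM2l => //; apply: dmax_le; first by lra.
    by move=> j; case: (Hu j) => _ /ltW.
  have : C * (H + d) = C * H + C * d by rewrite mulrDr.
  lra.
Qed.

End H.

Theorem mainTheorem1 (R : realType) (D : R) (M L p : nat)
  (f : 'I_L -> ('I_p -> pt R M) -> pt R M)
  (A : set (pt R M)) (n : nat -> nat) (K0 : set (pt R M)) :
  0 < D -> (1 <= L)%N -> (1 <= M)%N -> (2 <= p)%N ->
  (* each f_l maps X^p into X and is a contraction *)
  (forall l u, tuples (cube D) u -> cube D (f l u)) ->
  (forall l, exists c, lipc_on D (f l) c) ->
  (forall l, liprate D (f l) < 1) ->
  (* A is the attractor *)
  A !=set0 -> compact A -> A `<=` cube D ->
  A = [set y | exists (l : 'I_L) (u : 'I_p -> pt R M), tuples A u /\ y = f l u] ->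
  (* grid parameters and initial set *)
  (forall k, (1 <= k)%N -> (0 < n k)%N) ->
  K0 !=set0 -> finite_set K0 -> K0 `<=` cube D ->
  let C := \big[Num.max/0]_(l < L) liprate D (f l) in
  let eps := fun k => D * Num.sqrt M%:R / (n k)%:R in
  forall k : nat, (1 <= k)%N ->
    hausdorff (Atil f D n K0 k) A <=
      \sum_(0 <= i < k) C ^+ i * eps (k - i)%N + C ^+ k * (D * Num.sqrt M%:R).
Proof.
move=> D0 L1 M1 p2 fcube flip lip1 An0 Acomp Acube HA n0 K0n0 K0fin K0cube C eps k k1.
pose l0 : 'I_L := Ordinal L1.
have lp := fun l => liprate_prop R M p D (f l) (flip l).
have lC : forall l, liprate D (f l) <= C by move=> l; exact: le_bigmax.
have C0 : 0 <= C by apply: le_trans (lC l0); case: (lp l0).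
have fC : forall l u v, tuples (cube D) u -> tuples (cube D) v ->
    Defs.edist (f l u) (f l v) <= C * dmax u v.
  move=> l u v hu hv; apply: le_trans ((lp l).2 u v hu hv) _.
  by apply: ler_wpM2r; [apply: dmax_ge0 | apply: lC].
suff: forall k, [/\ Atil f D n K0 k !=set0, Atil f D n K0 k `<=` cube D &
   hausdorff (Atil f D n K0 k) A <=
      \sum_(0 <= i < k) C ^+ i * eps (k - i)%N + C ^+ k * (D * Num.sqrt M%:R)].
  by move=> /(_ k) [].
elim => [|j [IHn IHc IHh]].
  split => //=.
  rewrite big_geq // add0r expr0 mul1r.
  rewrite /hausdorff ge_max; apply/andP; split.
    apply: exc_le => // x Kx; case: An0 => a Aa.
    apply: le_trans (infd_le R M _ _ a Aa) _.
    by apply: dist_cube => //; [exact: ltW | exact: K0cube | exact: Acube].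
  apply: exc_le => // x Ax; case: K0n0 => a Aa.
  apply: le_trans (infd_le R M _ _ a Aa) _.
  by apply: dist_cube => //; [exact: ltW | exact: Acube | exact: K0cube].
have [Sn Sc Sh] := @step_lemma R M p D L f A (Atil f D n K0 j) (n j.+1) C l0
  D0 (n0 j.+1 isT) C0 fcube fC An0 Acube HA IHn IHc.
split => //.
apply: le_trans Sh _.
rewrite big_nat_recl // expr0 mul1r subn0 -addrA lerD2l.
have -> : \sum_(0 <= i < j) C ^+ i.+1 * eps (j.+1 - i.+1)%N + C ^+ j.+1 * (D * Num.sqrt M%:R)
  = C * (\sum_(0 <= i < j) C ^+ i * eps (j - i)%N + C ^+ j * (D * Num.sqrt M%:R)).
  rewrite mulrDr big_distrr /= exprS -mulrA; congr (_ + _).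
  by apply: eq_bigr => i _; rewrite subSS exprS mulrA.
exact: ler_wpM2l.
Qed.
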